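(* Let $H$ be a digraph with at least two vertices and $r\in V(H)$ such that every vertex of $H$ is reachable from $r$, and let $(\hat T,\{B_x\}_{x\in V(\hat T)})$ be the $r$-rooted cut decomposition of $H$. Let $x\in V(\hat T)$, let $\hat P=x_0x_1\dots x_\ell$ be the path in $\hat T$ from $r=x_0$ to $x=x_\ell$, and let $F_0,\dots,F_\ell$ be the fins of $\hat P$. Let $P$ be a directed path in $H$ from $r$ to a vertex $v\in B_x$. Then for every $0\le i<\ell$, $P$ visits $x_i$ before $x_{i+1}$, and the vertices of the subpath $P[x_i,x_{i+1}]$ other than $x_{i+1}$ are all contained in $\bigcup_{y\in F_i}B_y$.
   Context: Digraphs are finite and without loops; paths are directed. For a path $P$ and vertices $a,b$ on it with $a$ before $b$, $P[a,b]$ is the subpath from $a$ to $b$. A vertex $v$ is bi-reachable from $r$ if there are two internally vertex-disjoint directed paths from $r$ to $v$. For a digraph $H$ with at least two vertices and $r\in V(H)$ such that every vertex of $H$ is reachable from $r$, the diblock $B_r$ of $r$ in $H$ is the set of all vertices bi-reachable from $r$, together with $r$ and all out-neighbours of $r$. For $x\in B_r\setminus\{r\}$ let $X_x$ be the set of vertices $v\in V(H)\setminus B_r$ such that every directed $r$–$v$ path intersects $B_r$ for the last time in $x$; $x$ is a bottleneck of $B_r$ if $X_x\ne\emptyset$ (the sets $X_x$ partition $V(H)\setminus B_r$). The $r$-rooted cut decomposition $(\hat T,\{B_x\}_{x\in V(\hat T)})$ of $H$ is defined recursively: $\hat T$ is a rooted tree with root $r$ and $V(\hat T)\subseteq V(H)$;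 the set associated with the root is $B_r$; the children of $r$ are the bottlenecks of $B_r$; and for each bottleneck $x$, the subtree of $\hat T$ rooted at $x$ together with its associated sets is the $x$-rooted cut decomposition of the induced subgraph $H[X_x\cup\{x\}]$. For a node $x$, $\hat T_x$ is the subtree of $\hat T$ rooted at $x$. For a path $x_0x_1\dots x_\ell$ in $\hat T$ from the root $x_0$, its fins are $F_{i}=V(\hat T_{x_i})\setminus V(\hat T_{x_{i+1}})$ for $0\le i<\ell$ and $F_\ell=V(\hat T_{x_\ell})$. *)

(* Defs.v *)
From mathcomp Require Import all_boot.
Set Implicit Arguments. Unset Strict Implicit. Unset Printing Implicit Defensive.

Section CutDecomposition.
Variables (V : finType) (e : rel V).

(* [a :: p] is a directed (simple) path from a to b in the induced subgraph H[S]. *)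
Definition dipath (S : V -> Prop) (a b : V) (p : seq V) : Prop :=
  [/\ path e a p, last a p = b, uniq (a :: p) & forall u, u \in a :: p -> S u].

Definition interior (a : V) (p : seq V) : seq V := behead (belast a p).

Definition bireachable (S : V -> Prop) (r v : V) : Prop :=
  exists p1 p2, [/\ dipath S r v p1, dipath S r v p2 &
    ~~ has (fun u => u \in interior r p2) (interior r p1)].

Definition in_diblock (S : V -> Prop) (r v : V) : Prop :=
  S v /\ (v = r \/ e r v \/ bireachable S r v).

Definition last_hit_is (B : V -> Prop) (q : seq V) (x : V) : Prop :=
  exists k, [/\ k < size q, nth x q k = x, B x &
    forall j, k < j < size q -> ~ B (nth x q j)].

Definition in_X (S : V -> Prop) (r x v : V) : Prop :=
  [/\ S v, ~ in_diblock S r v &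
    forall p, dipath S r v p -> last_hit_is (in_diblock S r) (r :: p) x].

Definition bottleneck (S : V -> Prop) (r x : V) : Prop :=
  [/\ in_diblock S r x, x <> r & exists v, in_X S r x v].

(* cut_node S r q B : in the r-rooted cut decomposition of H[S], q is the
   path in T^ from the root r to some node y (so y = last element of q),
   and B is the set B_y associated with y. *)
Inductive cut_node : (V -> Prop) -> V -> seq V -> (V -> Prop) -> Prop :=
| cut_root S r : cut_node S r [:: r] (in_diblock S r)
| cut_sub S r x p B : bottleneck S r x ->
    cut_node (fun v => in_X S r x v \/ v = x) x p B ->
    cut_node S r (r :: p) B.

(* u lies in the union of the B_y over y in the fin F_i of the T^-path xs
   (F_i = nodes of T^_{x_i} not in T^_{x_{i+1}}), for the decomposition of H. *)
Definition in_fin_union (r : V) (xs : seq V) (i : nat) (u : V) : Prop :=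
  exists q B, [/\ cut_node (fun _ => True) r q B,
    prefix (take i.+1 xs) q, ~~ prefix (take i.+2 xs) q & B u].

End CutDecomposition.

(* Main.v *)
Require Import Defs.
From mathcomp Require Import all_boot.
From Stdlib Require Import Classical.
From mathcomp Require Import zify.
Set Implicit Arguments. Unset Strict Implicit. Unset Printing Implicit Defensive.

Lemma interior_mem (V : finType) (a u : V) p :
  uniq (a :: p) -> u \in interior a p -> (u \in p) && (u != last a p).
Proof.
case: p => [|x p] // Hu.
rewrite /interior /= => Hi.
have E := lastI x p.
have : uniq (x :: p) by case/andP: Hu.
rewrite E rcons_uniq => /andP[Hn _].
apply/andP; split.
  by rewrite mem_rcons in_cons Hi orbT.
by apply: contraNneq Hn => <-.
Qed.

Lemma mem_interior (V : finType) (a u : V) p :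
  u \in p -> u != last a p -> u \in interior a p.
Proof.
case: p => [|x p] //= Hu Hne.
rewrite /interior /=.
move: Hu; rewrite (lastI x p) mem_rcons in_cons.
by rewrite (negbTE Hne).
Qed.

Lemma split_seq (V : finType) (a c : V) p :
  c \in a :: p -> exists p1 p2, p = p1 ++ p2 /\ last a p1 = c.
Proof.
rewrite in_cons => /orP[/eqP ->|]; first by exists [::], p.
move=> /splitPr [p1 p2]; exists (rcons p1 c), p2.
by rewrite cat_rcons last_rcons.
Qed.

Lemma last_split_bool (V : finType) (kk : pred V) (a : V) p :
  kk a -> exists p1 p2, p = p1 ++ p2 /\ kk (last a p1) /\ ~~ has kk p2.
Proof.
move=> Ha; elim/last_ind: p => [|p y IH]; first by exists [::], [::].
case Hy: (kk y).
  by exists (rcons p y), [::]; rewrite cats0 last_rcons Hy.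
case: IH => p1 [p2 [-> [H1 H2]]].
exists p1, (rcons p2 y); split; first by rewrite rcons_cat.
by rewrite has_rcons Hy /= (negbTE H2).
Qed.

Lemma last_split_prop (V : finType) (B : V -> Prop) (a : V) p :
  B a -> exists p1 p2, p = p1 ++ p2 /\ B (last a p1) /\ forall u, u \in p2 -> ~ B u.
Proof.
move=> Ha; elim/last_ind: p => [|p y IH]; first by exists [::], [::].
case: (classic (B y)) => Hy.
  by exists (rcons p y), [::]; rewrite cats0 last_rcons.
case: IH => p1 [p2 [-> [H1 H2]]].
exists p1, (rcons p2 y); split; first by rewrite rcons_cat.
split=> // u; rewrite mem_rcons in_cons => /orP[/eqP ->//|]; exact: H2.
Qed.

Lemma first_split (V : finType) (pr : pred V) s :
  has pr s -> exists s1 d s2, s = s1 ++ d :: s2 /\ pr d /\ ~~ has pr s1.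
Proof.
elim: s => [|x s IH] //=.
case Hx: (pr x) => /=; first by move=> _; exists [::], x, s.
case/IH=> s1 [d [s2 [-> [Hd Hs]]]].
by exists (x :: s1), d, s2; rewrite /= Hx.
Qed.


Lemma walk_dipath (V : finType) (e : rel V) (S : V -> Prop) (r : V) s :
  S r -> path e r s -> (forall u, u \in s -> S u) ->
  exists p, dipath e S r (last r s) p /\ {subset p <= s}.
Proof.
move=> Sr Hp HS; case: (shortenP Hp) => p' Hp' Hu Hsub.
exists p'; split=> //; split=> // u; rewrite in_cons => /orP[/eqP ->//|/Hsub].
exact: HS.
Qed.

Lemma dipath_splitcat (V : finType) (e : rel V) (S : V -> Prop) (a b : V) p1 p2 :
  dipath e S a b (p1 ++ p2) ->
  dipath e S a (last a p1) p1 /\ dipath e S (last a p1) b p2.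
Proof.
case=> Hp Hl Hu HS.
move: Hp; rewrite cat_path => /andP[H1 H2].
move: Hl; rewrite last_cat => Hl.
have Hu' : uniq ((a :: p1) ++ p2) by [].
move: Hu'; rewrite cat_uniq => /and3P[U1 U2 U3].
split; split=> //.
- by move=> u Hu0; apply: HS; rewrite -cat_cons mem_cat Hu0.
- rewrite /= U3 andbT; apply/negP=> Hin; move/negP: U2; apply.
  by apply/hasP; exists (last a p1) => //; apply: mem_last.
- move=> u; rewrite in_cons => /orP[/eqP ->|Hin]; apply: HS.
    by rewrite -cat_cons mem_cat mem_last.
  by rewrite -cat_cons mem_cat Hin orbT.
Qed.

Lemma dipath_cat (V : finType) (e : rel V) (S : V -> Prop) (a b c : V) p1 p2 :
  dipath e S a c p1 -> dipath e S c b p2 ->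
  (forall w, w \in a :: p1 -> w \in p2 -> False) ->
  dipath e S a b (p1 ++ p2).
Proof.
case=> P1 L1 U1 S1 [P2 L2 U2 S2] D.
split.
- by rewrite cat_path P1 L1 P2.
- by rewrite last_cat L1.
- have U2' : uniq p2 by case/andP: U2.
  rewrite -cat_cons cat_uniq U1 U2' andbT /=.
  apply/hasP => -[w Hw2 Hw1]; exact: (D w Hw1 Hw2).
- move=> u; rewrite -cat_cons mem_cat => /orP[/S1 //|Hu]; apply: S2.
  by rewrite in_cons Hu orbT.
Qed.

Lemma diblock_bi (V : finType) (e : rel V) (S : V -> Prop) (r a : V) :
  S r -> in_diblock e S r a -> bireachable e S r a.
Proof.
move=> Sr [Sa [->|[Hra|//]]].
  exists [::], [::]; split=> //; split=> // u; rewrite in_cons => /orP[/eqP->|]//.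
case: (eqVneq a r) => [->|Har].
  exists [::], [::]; split=> //; split=> // u; rewrite in_cons => /orP[/eqP->|]//.
have D : dipath e S r a [:: a].
  split=> //=; first by rewrite Hra.
    by rewrite in_cons eq_sym (negbTE Har).
  by move=> u; rewrite !in_cons => /orP[/eqP->|/orP[/eqP->|]].
by exists [:: a], [:: a]; split.
Qed.

Lemma avoid_bi (V : finType) (e : rel V) (S : V -> Prop) (r a u : V) :
  bireachable e S r a -> u != r -> u != a ->
  exists p, dipath e S r a p /\ u \notin p.
Proof.
move=> [p1 [p2 [D1 D2 Hh]]] Hur Hua.
case: (boolP (u \in p1)) => H1; last by exists p1.
case: (boolP (u \in p2)) => H2; last by exists p2.
exfalso; move/negP: Hh; apply; apply/hasP; exists u.
  by apply: mem_interior => //; case: D1 => _ -> _ _.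
by apply: mem_interior => //; case: D2 => _ -> _ _.
Qed.

Lemma uniq_disj (V : eqType) (s1 s2 : seq V) w :
  uniq (s1 ++ s2) -> w \in s1 -> w \in s2 -> False.
Proof.
rewrite cat_uniq => /and3P[_ /hasPn H _] H1 H2.
by move: (H w H2); rewrite H1.
Qed.

Lemma last_in (V : eqType) (a : V) p : p != [::] -> last a p \in p.
Proof. by case: p => // x p _; rewrite /= mem_last. Qed.

Lemma menger_step (V : finType) (e : rel V) (S : V -> Prop) (r z : V) :
  (forall u, u != r -> u != z -> exists p, dipath e S r z p /\ u \notin p) ->
  forall n xp yp y X1 X2, dipath e S r z xp -> dipath e S r y yp ->
  yp != [::] -> xp = X1 ++ y :: X2 -> size X2 <= n ->
  (forall w, w \in yp -> w \in xp -> w = y) -> bireachable e S r z.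
Proof.
move=> Hav; elim=> [|n IH] xp yp y X1 X2 Dx Dy Hyp Ex Hs Hd;
  (case: (eqVneq y z) => [Eyz|Nyz]);
  [ | | |].
- subst y. exists xp, yp; split=> //; apply/hasP => -[u Hi1 Hi2].
  case: Dx => _ Lx Ux _; case: Dy => _ Ly Uy _.
  move: (interior_mem Ux Hi1) => /andP[Hu1 Hn1].
  move: (interior_mem Uy Hi2) => /andP[Hu2 _].
  by move: Hn1; rewrite Lx (Hd u Hu2 Hu1) eqxx.
- exfalso; move: Hs; rewrite leqn0 size_eq0 => /eqP HX2; subst X2.
  case: Dx => _ Lx _ _; move: Lx; rewrite Ex last_cat /= => Hl.
  by move: Nyz; rewrite Hl eqxx.
- subst y. exists xp, yp; split=> //; apply/hasP => -[u Hi1 Hi2].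
  case: Dx => _ Lx Ux _; case: Dy => _ Ly Uy _.
  move: (interior_mem Ux Hi1) => /andP[Hu1 Hn1].
  move: (interior_mem Uy Hi2) => /andP[Hu2 _].
  by move: Hn1; rewrite Lx (Hd u Hu2 Hu1) eqxx.
have Dx' := Dx; have Dy' := Dy.
case: Dx' => Px Lx Ux Sx; case: Dy' => Py Ly Uy Sy.
have yinyp : y \in yp by rewrite -Ly; apply: last_in.
have Nyr : y != r.
  by apply: contraTneq yinyp => ->; move: Uy => /andP[].
have Urx : r \notin xp by case/andP: Ux.
have Uxp : uniq xp by case/andP: Ux.
have UX : uniq ((X1 ++ [:: y]) ++ X2) by rewrite -catA /= -Ex.
have Nz : X2 != [::].
  by apply/eqP => HX2; move: Lx; rewrite Ex HX2 last_cat /= => Hl; move: Nyz; rewrite Hl eqxx.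
have zX2 : z \in X2 by rewrite -Lx Ex last_cat /=; apply: last_in.
have yX1 : y \notin X1.
  by move: Uxp; rewrite Ex cat_uniq => /and3P[_ /hasPn H _]; apply: H; rewrite in_cons eqxx.
have yX2 : y \notin X2.
  apply/negP => H; move: Uxp; rewrite Ex cat_uniq => /and3P[_ _] /=.
  by rewrite H.
have X12 : forall w, w \in X1 -> w \in X2 -> False.
  by move=> w H1 H2; apply: (uniq_disj UX _ H2); rewrite mem_cat H1.
have xpE : forall w, (w \in xp) = [|| w \in X1, w == y | w \in X2].
  by move=> w; rewrite Ex mem_cat in_cons.
case: (Hav y Nyr Nyz) => rp [Dr yrp].
set kk := [pred w | (w \in r :: X1) || ((w \in r :: yp) && (w != y))].
have kkr : kk r by rewrite /= in_cons eqxx.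
case: (last_split_bool rp kkr) => rp1 [rp2 [Erp [kkc nkk2]]].
set c := last r rp1 in kkc.
move: (Dr); rewrite Erp => /dipath_splitcat [DR1 DR2].
have zr : z != r by apply: contraNneq Urx => <-; rewrite xpE zX2 !orbT.
have zX1 : z \notin X1 by apply/negP => H; exact: (X12 _ H zX2).
have zyp : z \notin yp.
  by apply/negP => H; move: Nyz; rewrite (Hd z H) ?eqxx // xpE zX2 !orbT.
have nkkz : ~~ kk z by rewrite /= !in_cons (negbTE zr) (negbTE zX1) (negbTE zyp).
have Nrp2 : rp2 != [::].
  apply/eqP => H; case: DR2 => _ L2 _ _; move: L2; rewrite H /= => Hcz.
  by move: nkkz; rewrite -Hcz kkc.
have zrp2 : z \in rp2 by case: DR2 => _ L2 _ _; rewrite -L2; apply: last_in.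
set XY := [pred w | (w \in r :: xp) || (w \in yp)].
have hXY : has XY rp2 by apply/hasP; exists z => //; rewrite /= in_cons xpE zX2 !orbT.
case: (first_split hXY) => s1 [d [s3 [Erp2 [XYd nXYs1]]]].
have drp2 : d \in rp2 by rewrite Erp2 mem_cat in_cons eqxx orbT.
have nkkd : ~~ kk d by apply: (hasPn nkk2).
have Ndy : d != y.
  by apply: contraNneq yrp => <-; rewrite Erp mem_cat drp2 orbT.
have dr : d != r.
  apply/negP => /eqP Hdr; case: Dr => _ _ /andP[H _] _.
  by move: H; rewrite Erp mem_cat -Hdr drp2 orbT.
have dX1 : d \notin X1 by apply: contra nkkd => H; rewrite /= in_cons H orbT.
have dyp : d \notin yp by apply: contra nkkd => H; rewrite /= !in_cons H Ndy !orbT.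
have dX2 : d \in X2.
  move: XYd; rewrite /= in_cons xpE (negbTE dr) (negbTE dX1) (negbTE Ndy) (negbTE dyp) /=.
  by rewrite orbF.
have DS : dipath e S c d (rcons s1 d).
  move: DR2; rewrite Erp2 -cat_rcons => /dipath_splitcat [H _].
  by move: H; rewrite last_rcons.
have [D1 [D2 EX2]] : exists D1 D2, X2 = D1 ++ d :: D2.
  by case/splitPr: dX2 => D1 D2; exists D1, D2.
have sD2 : size D2 <= n by move: Hs; rewrite EX2; rewrite size_cat /= addnS ltnS; apply: leq_trans; apply: leq_addl.
have s1XY : forall w, w \in s1 -> ~~ XY w by move=> w; apply: (hasPn nXYs1).
have dxp : d \in xp by rewrite xpE dX2 !orbT.
case: (boolP ((c \in r :: yp) && (c != y))) => [/andP[cyp Ncy]|Hc].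
-
  case: (split_seq cyp) => yq1 [yq2 [Eyp Lc]].
  move: (Dy); rewrite Eyp => /dipath_splitcat; rewrite Lc => -[DYQ DYQ2].
  have Nyq2 : yq2 != [::].
    by apply/eqP => H; case: DYQ2 => _ L _ _; move: L; rewrite H /= => L; move: Ncy; rewrite L eqxx.
  have yyq2 : y \in yq2 by case: DYQ2 => _ L _ _; rewrite -L; apply: last_in.
  have yyq1 : y \notin r :: yq1.
    apply/negP => H; have U : uniq ((r :: yq1) ++ yq2) by rewrite /= -Eyp.
    exact: (uniq_disj U H yyq2).
  have Dn : dipath e S r d (yq1 ++ rcons s1 d).
    apply: (dipath_cat DYQ DS) => w Hw1; rewrite mem_rcons in_cons => /orP[/eqP Hwd|Hws].
      subst w; move: Hw1; rewrite in_cons (negbTE dr) /= => Hw1.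
      by move: Ndy; rewrite (Hd d) ?eqxx // Eyp mem_cat Hw1.
    move: (s1XY w Hws); rewrite /= in_cons; move: Hw1; rewrite in_cons => /orP[->//|Hw1].
    by rewrite Eyp mem_cat Hw1 !orbT.
  apply: (IH xp _ d (X1 ++ y :: D1) D2 Dx Dn) => //.
  + by rewrite -size_eq0 size_cat size_rcons addnS.
  + by rewrite Ex EX2 -catA.
  + move=> w; rewrite mem_cat mem_rcons in_cons => /orP[Hw1|/orP[/eqP//|Hws]] Hwx.
      by move: yyq1; rewrite in_cons -(Hd w) ?Eyp ?mem_cat ?Hw1 ?orbT.
    by move: (s1XY w Hws); rewrite /= in_cons Hwx orbT.
-
  have cX1 : c \in X1.
    move: kkc; rewrite /kk /= => /orP[|H]; last by rewrite H in Hc.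
    rewrite in_cons => /orP[/eqP Hcr|//].
    by move: Hc; rewrite Hcr in_cons eqxx /= eq_sym Nyr.
  have Ncr : c != r by apply: contraTneq cX1 => ->; apply: contra Urx => H; rewrite xpE H.
  have cyp : c \notin yp.
    have Ncy : c != y by apply/negP => /eqP Hcy; move: yX1; rewrite -Hcy cX1.
    by apply/negP => H; move: Hc; rewrite in_cons H orbT Ncy.
  case: (split_seq (a := r) (c := c) (p := X1)) => [|X11 [X1b [EX1 LX11]]].
    by rewrite in_cons cX1 orbT.
  have DXQ : dipath e S r c X11.
    by move: (Dx); rewrite Ex EX1 -catA => /dipath_splitcat; rewrite LX11 => -[].
  have DX2 : dipath e S y z X2.
    move: (Dx); rewrite Ex -cat_rcons => /dipath_splitcat; rewrite last_rcons => -[_].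
    by [].
  have Dxn : dipath e S r z (yp ++ X2).
    apply: (dipath_cat Dy DX2) => w; rewrite in_cons => /orP[/eqP ->|Hw1] Hw2.
      by move: Urx; rewrite xpE Hw2 !orbT.
    by move: yX2; rewrite -(Hd w Hw1) ?Hw2 // xpE Hw2 !orbT.
  have wX1 : forall w, w \in X11 -> w \in X1 by move=> w Hw; rewrite EX1 mem_cat Hw.
  have Dyn : dipath e S r d (X11 ++ rcons s1 d).
    apply: (dipath_cat DXQ DS) => w Hw1; rewrite mem_rcons in_cons => /orP[/eqP Hwd|Hws].
      subst w; move: Hw1; rewrite in_cons (negbTE dr) /= => Hw1.
      exact: (X12 d (wX1 _ Hw1)).
    move: (s1XY w Hws); rewrite /= in_cons; move: Hw1; rewrite in_cons => /orP[->//|Hw1].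
    by rewrite xpE (wX1 _ Hw1) !orbT.
  apply: (IH (yp ++ X2) _ d (yp ++ D1) D2 Dxn Dyn) => //.
  + by rewrite -size_eq0 size_cat size_rcons addnS.
  + by rewrite EX2 catA.
  + move=> w; rewrite mem_cat mem_rcons in_cons => /orP[Hw1|/orP[/eqP//|Hws]];
      rewrite mem_cat => /orP[Hw2|Hw2].
    * by move: yX1; rewrite -(Hd w Hw2) ?(wX1 _ Hw1) // xpE (wX1 _ Hw1).
    * by exfalso; apply: (X12 w (wX1 _ Hw1)).
    * by move: (s1XY w Hws); rewrite /= Hw2 orbT.
    * by move: (s1XY w Hws); rewrite /= in_cons xpE Hw2 !orbT.
Qed.

Lemma menger (V : finType) (e : rel V) (S : V -> Prop) (r z : V) p :
  z != r -> dipath e S r z p ->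
  (forall u, u != r -> u != z -> exists p, dipath e S r z p /\ u \notin p) ->
  bireachable e S r z.
Proof.
move=> Nzr Dp Hav.
case: p Dp => [|x1 p'] Dp.
  by case: Dp => _ /= L _ _; move: Nzr; rewrite L eqxx.
have Dx1 : dipath e S r x1 [:: x1].
  by move: (Dp); rewrite -cat1s => /dipath_splitcat [].
apply: (menger_step Hav (n := size p') (X1 := [::]) (X2 := p') Dp Dx1) => //.
by move=> w; rewrite in_cons => /orP[/eqP|].
Qed.

Lemma walk_cat (V : finType) (e : rel V) (S : V -> Prop) (r a : V) pa q :
  S r -> dipath e S r a pa -> path e a q -> (forall x, x \in q -> S x) ->
  exists p, dipath e S r (last a q) p /\ {subset p <= pa ++ q}.
Proof.
move=> Sr [Pa La _ Sa] Pq Sq.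
have := @walk_dipath V e S r (pa ++ q) Sr.
rewrite last_cat La; apply.
  by rewrite cat_path Pa La.
move=> u; rewrite mem_cat => /orP[H|/Sq //]; apply: Sa; rewrite in_cons H orbT.
by [].
Qed.

Lemma partition (V : finType) (e : rel V) (S : V -> Prop) (r w : V) p p' P1 P2 P1' P2' :
  S r -> dipath e S r w p -> dipath e S r w p' -> ~ in_diblock e S r w ->
  p = P1 ++ P2 -> in_diblock e S r (last r P1) ->
  (forall u, u \in P2 -> ~ in_diblock e S r u) ->
  p' = P1' ++ P2' -> in_diblock e S r (last r P1') ->
  (forall u, u \in P2' -> ~ in_diblock e S r u) ->
  last r P1 = last r P1'.
Proof.
move=> Sr Dp Dp' Nw Ep Ba NB2 Ep' Bb NB2'.
apply: NNPP => Nab.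
set a := last r P1 in Ba Nab; set b := last r P1' in Bb Nab.
move: Dp; rewrite Ep => /dipath_splitcat [DA1 DA].
move: Dp'; rewrite Ep' => /dipath_splitcat [DB1 DB].
have aT2 : a \notin b :: P2'.
  rewrite in_cons negb_or; apply/andP; split; first by apply/eqP.
  by apply/negP => H; apply: (NB2' a H).
have bT1 : b \notin a :: P2.
  rewrite in_cons negb_or; apply/andP; split; first by apply/eqP => H; apply: Nab.
  by apply/negP => H; apply: (NB2 b H).
have NP2 : P2 != [::].
  by apply/eqP => H; case: DA => _ L _ _; move: L; rewrite H /= => L; apply: Nw; rewrite -L.
have wP2 : w \in P2 by case: DA => _ L _ _; rewrite -L; apply: last_in.
have wT2 : w \in b :: P2' by case: DB => _ L _ _; rewrite -L; apply: mem_last.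
have hh : has (mem (b :: P2')) P2 by apply/hasP; exists w.
case: (first_split hh) => A1 [z [A2 [EP2 [zT2' nA1]]]].
have zT2 : z \in b :: P2' by exact: zT2'.
have zP2 : z \in P2 by rewrite EP2 mem_cat in_cons eqxx orbT.
have Nbz : z != b by apply: contraNneq bT1 => <-; rewrite in_cons zP2 orbT.
have zP2' : z \in P2' by move: zT2; rewrite in_cons (negbTE Nbz).
case: (split_seq zT2) => C1 [C2 [EP2' LC1]].
have PA : path e a (rcons A1 z).
  by case: DA => P _ _ _; move: P; rewrite EP2 -cat_rcons cat_path => /andP[].
have PB : path e b C1.
  by case: DB => P _ _ _; move: P; rewrite EP2' cat_path => /andP[].
have SA : forall x, x \in rcons A1 z -> S x.
  move=> x Hx; case: DA => _ _ _ SS; apply: SS; rewrite in_cons EP2 -cat_rcons mem_cat Hx !orbT.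
  by [].
have SB : forall x, x \in C1 -> S x.
  by move=> x Hx; case: DB => _ _ _ SS; apply: SS; rewrite in_cons EP2' mem_cat Hx !orbT.
have Biz : bireachable e S r z.
  have Nzr : z != r.
    by apply/eqP => H; apply: (NB2 z zP2); rewrite H; split=> //; left.
  case: (walk_cat Sr DA1 PA SA) => p0; rewrite last_rcons => -[Dp0 _].
  apply: (menger Nzr Dp0) => u Nur Nuz.
  case: (boolP (u \in a :: A1)) => Hu.
  - have Hub : u \notin b :: C1.
      apply/negP => H; have H' : u \in b :: P2' by move: H; rewrite !in_cons EP2' mem_cat => /orP[->|->]; rewrite ?orbT.
      move: Hu; rewrite in_cons => /orP[/eqP Hua|HuA].
        by move: aT2; rewrite -Hua H'.
      by move/hasPn: nA1 => /(_ u HuA) /negP; apply; exact: H'.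
    have Nub : u != b by apply: contra Hub => /eqP ->; rewrite mem_head.
    case: (avoid_bi (diblock_bi Sr Bb) Nur Nub) => pb [Dpb upb].
    case: (walk_cat Sr Dpb PB SB) => p1; rewrite LC1 => -[Dp1 Hs].
    exists p1; split=> //; apply/negP => /Hs; rewrite mem_cat (negbTE upb) /=.
    by apply/negP; apply: contra Hub => H; rewrite in_cons H orbT.
  - have Nua : u != a by apply: contra Hu => /eqP ->; rewrite mem_head.
    case: (avoid_bi (diblock_bi Sr Ba) Nur Nua) => pa [Dpa upa].
    case: (walk_cat Sr Dpa PA SA) => p1; rewrite last_rcons => -[Dp1 Hs].
    exists p1; split=> //; apply/negP => /Hs; rewrite mem_cat (negbTE upa) /= mem_rcons in_cons (negbTE Nuz) /=.
    by apply/negP; apply: contra Hu => H; rewrite in_cons H orbT.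
apply: (NB2 z zP2); split=> //; last by right; right.
by case: DA => _ _ _ SS; apply: SS; rewrite in_cons zP2 orbT.
Qed.

Lemma split_lasthit (V : finType) (B : V -> Prop) (r : V) Q1 Q2 :
  B (last r Q1) -> (forall u, u \in Q2 -> ~ B u) ->
  last_hit_is B (r :: Q1 ++ Q2) (last r Q1).
Proof.
move=> HB HQ2; exists (size Q1); split=> //.
- by rewrite /= size_cat ltnS leq_addr.
- rewrite -cat_cons nth_cat /= ltnSn.
  by have := nth_last (last r Q1) (r :: Q1); rewrite /= => ->.
- move=> j /andP[H1 H2]; rewrite -cat_cons nth_cat /= ltnNge H1 /=.
  apply: HQ2; apply: mem_nth; move: H2; rewrite /= size_cat.
  by case: j H1 => // j; rewrite !ltnS => H1 H2; rewrite subSS ltn_subLR.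
Qed.

Lemma lasthit_uniq (V : finType) (B : V -> Prop) q (x y : V) :
  last_hit_is B q x -> last_hit_is B q y -> x = y.
Proof.
move=> [k1 [H1 N1 B1 F1]] [k2 [H2 N2 B2 F2]].
case: (ltngtP k1 k2) => H.
- by exfalso; apply: (F1 k2); rewrite ?H ?H2 // (set_nth_default y) // N2.
- by exfalso; apply: (F2 k1); rewrite ?H ?H1 // (set_nth_default x) // N1.
- by rewrite -N1 -N2 H (set_nth_default y).
Qed.

Lemma lasthit_split (V : finType) (B : V -> Prop) (r x : V) P :
  B r -> last_hit_is B (r :: P) x ->
  exists P1 P2, [/\ P = P1 ++ P2, last r P1 = x, B x & forall u, u \in P2 -> ~ B u].
Proof.
move=> Br Hl; case: (last_split_prop P Br) => P1 [P2 [EP [HB HP2]]].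
have H2 := split_lasthit HB HP2; rewrite -EP in H2.
have E := lasthit_uniq Hl H2.
by exists P1, P2; rewrite E; split.
Qed.

Definition good (V : finType) (e : rel V) (S : V -> Prop) (r : V) :=
  S r /\ forall w, S w -> exists p, dipath e S r w p.

Definition subS (V : finType) (e : rel V) (S : V -> Prop) (r x : V) :=
  fun v => in_X e S r x v \/ v = x.

Lemma diblock_r (V : finType) (e : rel V) (S : V -> Prop) (r : V) :
  S r -> in_diblock e S r r.
Proof. by move=> Sr; split=> //; left. Qed.

Lemma dipath_last_S (V : finType) (e : rel V) (S : V -> Prop) (r w : V) p :
  dipath e S r w p -> S w.
Proof. by case=> _ <- _ SS; apply: SS; apply: mem_last. Qed.

Lemma in_X_path (V : finType) (e : rel V) (S : V -> Prop) (r w : V) p P1 P2 :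
  S r -> dipath e S r w p -> ~ in_diblock e S r w -> p = P1 ++ P2 ->
  in_diblock e S r (last r P1) -> (forall u, u \in P2 -> ~ in_diblock e S r u) ->
  in_X e S r (last r P1) w.
Proof.
move=> Sr Dp Nw Ep HB HP2; split=> //; first exact: dipath_last_S Dp.
move=> p' Dp'.
case: (last_split_prop p' (diblock_r e Sr)) => Q1 [Q2 [EQ [HQ HQ2]]].
have := partition Sr Dp Dp' Nw Ep HB HP2 EQ HQ HQ2.
by move=> ->; rewrite EQ; apply: split_lasthit.
Qed.

Lemma suffix_sub (V : finType) (e : rel V) (S : V -> Prop) (r w : V) p P1 P2 :
  S r -> dipath e S r w p -> p = P1 ++ P2 ->
  in_diblock e S r (last r P1) -> (forall u, u \in P2 -> ~ in_diblock e S r u) ->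
  dipath e (subS e S r (last r P1)) (last r P1) w P2.
Proof.
move=> Sr Dp Ep HB HP2.
move: (Dp); rewrite Ep => /dipath_splitcat [_ [P L U _]].
split=> // u; rewrite in_cons => /orP[/eqP ->|Hu]; first by right.
left.
case: (split_seq (a := last r P1) (c := u) (p := P2)) => [|V1 [V2 [EV LV]]].
  by rewrite in_cons Hu orbT.
have Dp' : dipath e S r u (P1 ++ V1).
  move: (Dp); rewrite Ep EV catA => /dipath_splitcat [H _].
  by move: H; rewrite last_cat LV.
have := in_X_path Sr Dp' (HP2 u Hu) (erefl _) HB.
by apply=> x Hx; apply: HP2; rewrite EV mem_cat Hx.
Qed.

Lemma reach_sub (V : finType) (e : rel V) (S : V -> Prop) (r x : V) :
  good e S r -> bottleneck e S r x -> good e (subS e S r x) x.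
Proof.
move=> [Sr Hr] [Bx Nxr _]; split; first by right.
move=> w [Hw|->]; last first.
  exists [::]; split=> // u; rewrite in_cons => /orP[/eqP ->|//]; by right.
case: (Hw) => Sw Nw Hall.
case: (Hr w Sw) => p Dp.
case: (lasthit_split (diblock_r e Sr) (Hall p Dp)) => P1 [P2 [Ep Lx HB HP2]].
exists P2; rewrite -Lx; apply: (suffix_sub Sr Dp Ep) => //; rewrite Lx. all: try done.
Qed.

Lemma cut_head (V : finType) (e : rel V) S r q B :
  cut_node e S r q B -> exists q', q = r :: q'.
Proof. by case=> [S0 r0|S0 r0 x p B0 _ _]; [exists [::] | exists p]. Qed.

Lemma cut_sub_S (V : finType) (e : rel V) S r q B :
  cut_node e S r q B -> forall u, B u -> S u.
Proof.
elim=> [S0 r0 u [] //|S0 r0 x p B0 [Bx _ _] _ IH u Hu].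
by case: (IH u Hu) => [[]|->] //; case: Bx.
Qed.

Lemma bottleneck_of (V : finType) (e : rel V) (S : V -> Prop) (r w : V) p :
  good e S r -> dipath e S r w p -> ~ in_diblock e S r w ->
  exists y, bottleneck e S r y /\ in_X e S r y w /\
    exists P1 P2, [/\ p = P1 ++ P2, last r P1 = y &
       forall u, u \in P2 -> ~ in_diblock e S r u].
Proof.
move=> [Sr Hr] Dp Nw.
case: (last_split_prop p (diblock_r e Sr)) => P1 [P2 [Ep [HB HP2]]].
have HX := in_X_path Sr Dp Nw Ep HB HP2.
exists (last r P1); split; last by split=> //; exists P1, P2.
split=> //; last by exists w.
case: P1 Ep HB HP2 {HX} => [|x1 P1] Ep HB HP2 /=.
  move: Dp; rewrite Ep /=; case: P2 Ep HP2 => [|x1 P2] Ep HP2.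
    by case=> _ /= L _ _ _; apply: Nw; rewrite -L; apply: diblock_r.
  case=> /= /andP[Hx1 _] _ _ SS; exfalso; apply: (HP2 x1); first by rewrite mem_head.
  split; first by apply: SS; rewrite !in_cons eqxx orbT.
  by right; left.
move=> H; case: Dp => _ _ /andP[Ur _] _; move: Ur; rewrite Ep mem_cat -H.
by rewrite mem_last.
Qed.

Lemma cover_n (V : finType) (e : rel V) n : forall (S : V -> Prop) r,
  good e S r -> (exists l : seq V, size l <= n /\ forall v, S v -> v \in l) ->
  forall w, S w -> exists q B, cut_node e S r q B /\ B w.
Proof.
elim: n => [|n IH] S r Hg [l [Hl Hs]] w Sw.
  by move: Hl; rewrite leqn0 size_eq0 => /eqP Hl; move: (Hs r (proj1 Hg)); rewrite Hl.
case: (classic (in_diblock e S r w)) => Hw.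
  by exists [:: r], (in_diblock e S r); split=> //; constructor.
case: (proj2 Hg w Sw) => p Dp.
case: (bottleneck_of Hg Dp Hw) => y [Hby [HX _]].
have Hg' := reach_sub Hg Hby.
case: (IH (subS e S r y) y Hg' _ w (or_introl HX)) => [|q [B [Hc HB]]].
  exists (filter (predC1 r) l); split.
    have : r \in l by apply: Hs; case: Hg.
    rewrite -has_pred1 has_count size_filter => Hc.
    have H := count_predC (pred1 r) l.
    have E : count (predC1 r) l = count (predC (pred1 r)) l by apply: eq_count.
    rewrite E; move: Hl Hc; rewrite -H; case: (count_mem r l) => // c1 + _; rewrite addSn ltnS; apply: leq_trans; apply: leq_addl.
  move=> v; rewrite mem_filter => -[[Sv Nv _]|->].
    rewrite Hs // andbT /=; apply/eqP => Hvr; apply: Nv; rewrite Hvr.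
    by apply: diblock_r; case: Hg.
  case: Hby => [[Sy _] Nyr _]; by rewrite Hs // andbT /=; apply/eqP.
exists (r :: q), B; split=> //; apply: (cut_sub Hby Hc).
Qed.

Lemma cover (V : finType) (e : rel V) (S : V -> Prop) r :
  good e S r -> forall w, S w -> exists q B, cut_node e S r q B /\ B w.
Proof.
move=> Hg; apply: (cover_n (n := size (enum V)) Hg).
by exists (enum V); split=> // v _; rewrite mem_enum.
Qed.

Definition gfin (V : finType) (e : rel V) (S : V -> Prop) (r : V) (xs : seq V) (i : nat) (u : V) :=
  exists q B, [/\ cut_node e S r q B, prefix (take i.+1 xs) q, ~~ prefix (take i.+2 xs) q & B u].

Lemma main_gen (V : finType) (e : rel V) S r xs Bx :
  cut_node e S r xs Bx -> good e S r ->
  forall v P, Bx v -> dipath e S r v P ->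
  forall i, i < (size xs).-1 ->
    [/\ nth r xs i \in r :: P, nth r xs i.+1 \in r :: P,
        index (nth r xs i) (r :: P) < index (nth r xs i.+1) (r :: P) &
      forall j, index (nth r xs i) (r :: P) <= j < index (nth r xs i.+1) (r :: P) ->
        gfin e S r xs i (nth r (r :: P) j)].
Proof.
elim=> [S0 r0|S0 r0 x p B0 Hbot Hc IH] Hg v P Bv DP i Hi //.
have Sr : S0 r0 by case: Hg.
have Hg' := reach_sub Hg Hbot.
have Sv' := cut_sub_S Hc Bv.
case: (cut_head Hc) => p' Ep; subst p.
have Nxr : x <> r0 by case: Hbot.
have [P1 [P2 [EP Lx HBx HP2]]] : exists P1 P2, [/\ P = P1 ++ P2, last r0 P1 = x,
    in_diblock e S0 r0 x & forall u, u \in P2 -> ~ in_diblock e S0 r0 u].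
  case: Sv' => [[_ _ Hall]|Hvx].
    exact: (lasthit_split (diblock_r e Sr) (Hall P DP)).
  exists P, [::]; split=> //; first by rewrite cats0.
    by case: DP => _ -> _ _.
  by case: Hbot.
have DP2 : dipath e (subS e S0 r0 x) x v P2.
  by rewrite -Lx; apply: (suffix_sub Sr DP EP) => //; rewrite Lx.
have EQ : r0 :: P = belast r0 P1 ++ x :: P2.
  by rewrite EP -cat_cons lastI Lx cat_rcons.
have UQ : uniq (r0 :: P) by case: DP.
have UQ' : uniq (belast r0 P1 ++ x :: P2) by rewrite -EQ.
have idxQ : forall w, w \in x :: P2 ->
    index w (r0 :: P) = size P1 + index w (x :: P2).
  move=> w Hw; rewrite EQ index_cat.
  case: ifP => [H|_]; last by rewrite size_belast.
  by exfalso; apply: (uniq_disj UQ' H Hw).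
have subQ : forall w, w \in x :: P2 -> w \in r0 :: P.
  by move=> w Hw; rewrite EQ mem_cat Hw orbT.
case: i Hi => [|i'] Hi.
-
  have -> : nth r0 [:: r0, x & p'] 0 = r0 by [].
  have -> : nth r0 [:: r0, x & p'] 1 = x by [].
  have -> : index r0 (r0 :: P) = 0 by rewrite /= eqxx.
  have xin : x \in x :: P2 by rewrite mem_head.
  have -> : index x (r0 :: P) = size P1 by rewrite (idxQ x xin) /= eqxx addn0.
  have NP1 : P1 != [::] by apply/eqP => H; move: Lx; rewrite H /= => H'; apply: Nxr.
  split.
  + by rewrite mem_head.
  + exact: subQ.
  + by rewrite lt0n size_eq0.
  move=> j /andP[_ Hj].
  have Hj' : j < size (belast r0 P1) by rewrite size_belast.
  rewrite EQ nth_cat Hj'.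
  set u := nth r0 (belast r0 P1) j.
  have ub : u \in belast r0 P1 by apply: mem_nth.
  have ux : u != x.
    by apply/eqP => H; apply: (uniq_disj UQ' ub); rewrite H mem_head.
  have uP1 : u \in r0 :: P1 by rewrite lastI mem_rcons in_cons ub orbT.
  case: (classic (in_diblock e S0 r0 u)) => Hu.
    exists [:: r0], (in_diblock e S0 r0); split; [constructor | | | done];
      by rewrite /= ?prefix_cons ?prefix0s ?prefixs0 ?eqxx.
  case: (split_seq uP1) => U1 [U2 [EU LU]].
  have Du : dipath e S0 r0 u U1.
    by move: (DP); rewrite EP EU -catA => /dipath_splitcat; rewrite LU => -[].
  case: (bottleneck_of Hg Du Hu) => y [Hby [HX [Q1 [Q2 [EU1 Ly _]]]]].
  have NU2 : U2 != [::].
    by apply/eqP => H; move: Lx; rewrite EU H cats0 LU => H'; move: ux; rewrite H' eqxx.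
  have xU2 : x \in U2 by rewrite -Lx EU last_cat LU; apply: last_in.
  have yU1 : y \in r0 :: U1.
    rewrite -Ly EU1; have := mem_last r0 Q1; rewrite !in_cons mem_cat => /orP[->//|->].
    by rewrite orbT.
  have Nyx : y != x.
    apply/eqP => H; move: UQ; rewrite EP EU -catA -cat_cons => Hu'.
    by apply: (uniq_disj Hu' yU1); rewrite mem_cat H xU2.
  case: (cover (reach_sub Hg Hby) (or_introl HX)) => q [B' [Hq HB']].
  case: (cut_head Hq) => q' Eq; subst q.
  exists (r0 :: y :: q'), B'; split=> //; first exact: (cut_sub Hby Hq).
    by rewrite (_ : take 1 _ = [:: r0]) // prefix_cons eqxx prefix0s.
  rewrite (_ : take 2 _ = [:: r0; x]); last by rewrite /= take0.
  by rewrite !prefix_cons eqxx /= (eq_sym x y) (negbTE Nyx).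
-
  have Hi' : i' < (size (x :: p')).-1 by move: Hi; rewrite /=; case: (size p') => // m; rewrite ltnS.
  have [H1 H2 H3 H4] := IH Hg' v P2 Bv DP2 i' Hi'.
  have Hs1 : i' < size (x :: p') by move: Hi' => /= ; case: (size p') => // m H; apply: ltnW; rewrite ltnS in H *; apply: leq_trans H _.
  have Hs2 : i'.+1 < size (x :: p') by move: Hi.
  have E1 : nth r0 [:: r0, x & p'] i'.+1 = nth x (x :: p') i'.
    by rewrite /= (set_nth_default x) //.
  have E2 : nth r0 [:: r0, x & p'] i'.+2 = nth x (x :: p') i'.+1.
    by rewrite [LHS]/= (set_nth_default x) //.
  rewrite E1 E2 (idxQ _ H1) (idxQ _ H2).
  split.
  + exact: subQ.
  + exact: subQ.
  + by rewrite ltn_add2l.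
  move=> j /andP[Hj1 Hj2].
  have Hk : size P1 <= j by apply: leq_trans Hj1; apply: leq_addr.
  have Hin : index (nth x (x :: p') i'.+1) (x :: P2) < size (x :: P2) by rewrite index_mem.
  move: Hj1 Hj2 Hin Hk.
  set a := index (nth x (x :: p') i') (x :: P2).
  set b := index (nth x (x :: p') i'.+1) (x :: P2).
  set m := size (x :: P2) => Hj1 Hj2 Hin Hk.
  have Hjl : j - size P1 < m by lia.
  rewrite EQ nth_cat size_belast ltnNge Hk /= (set_nth_default x) //.
  have Hab : a <= j - size P1 < b by apply/andP; split; lia.
  case: (H4 _ Hab) => q [B [Hq Hp1 Hp2 HB]].
  exists (r0 :: q), B; split=> //; first exact: (cut_sub Hbot Hq).
    by rewrite [take _ (r0 :: _)]/= prefix_cons eqxx.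
  by rewrite [take _ (r0 :: _)]/= prefix_cons eqxx.
Qed.

Theorem lemma10 (V : finType) (e : rel V) (r x v : V) (xs : seq V)
    (Bx : V -> Prop) (P : seq V) :
  (forall u, ~~ e u u) -> 1 < #|V| -> (forall u, connect e r u) ->
  cut_node e (fun _ => True) r xs Bx -> last r xs = x -> Bx v ->
  dipath e (fun _ => True) r v P ->
  forall i, i < (size xs).-1 ->
    let Q := r :: P in
    let xi := nth r xs i in
    let xi1 := nth r xs i.+1 in
    [/\ xi \in Q, xi1 \in Q, index xi Q < index xi1 Q &
      forall j, index xi Q <= j < index xi1 Q ->
        in_fin_union e r xs i (nth r Q j)].
Proof.
move=> _ _ Hc Hcut _ Bv DP i Hi.
have Hg : good e (fun _ => True) r.
  split=> // w _; case/connectP: (Hc w) => p Hp ->.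
  by case: (walk_dipath (S := fun _ => True) I Hp) => // q [Dq _]; exists q.
exact: (main_gen Hcut Hg Bv DP Hi).
Qed.
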